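(* Let $N<22$ be even. Then all rays and counter-rays of the Birkhoff polytope $\mathcal{B}_N$ consist of unistochastic matrices. Moreover, for $N\in\{2,4,8,12,16,20\}$ all these matrices are orthostochastic; for $N\in\{6,10,14,18\}$ they are unistochastic.
   Context: A bistochastic matrix is a real $N\times N$ matrix with nonnegative entries whose rows and columns each sum to 1; the set of them is the Birkhoff polytope $\mathcal{B}_N$. A bistochastic $B$ is unistochastic if there is a unitary $U$ with $B_{ij}=|U_{ij}|^2$ for all $i,j$, and orthostochastic if such $U$ can be chosen real orthogonal. $W_N$ is the $N\times N$ matrix with all entries $1/N$. For a permutation matrix $P$, its ray is $\{\alpha P+(1-\alpha)W_N:\alpha\ge0\}\cap\mathcal{B}_N$ and its counter-ray is $\{\alpha P+(1-\alpha)W_N:\alpha\le0\}\cap\mathcal{B}_N$. *)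

(* Defs.v *)
From mathcomp Require Import all_boot all_order all_algebra all_fingroup.
From mathcomp Require Import complex Rstruct.
From Stdlib Require Import Reals.
Set Implicit Arguments. Unset Strict Implicit. Unset Printing Implicit Defensive.
Import Order.TTheory GRing.Theory Num.Theory.
Local Open Scope ring_scope.

Notation Real := Rdefinitions.R.

Definition bistochastic (N : nat) (B : 'M[Real]_N) : Prop :=
  (forall i j, 0 <= B i j) /\
  (forall i, \sum_j B i j = 1) /\
  (forall j, \sum_i B i j = 1).

Definition unitary_mx (N : nat) (U : 'M[Real[i]]_N) : Prop :=
  U *m (map_mx Num.conj U)^T = 1%:M.

Definition orthogonal_mx (N : nat) (O : 'M[Real]_N) : Prop :=
  O *m O^T = 1%:M.

Definition unistochastic (N : nat) (B : 'M[Real]_N) : Prop :=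
  bistochastic B /\
  exists U : 'M[Real[i]]_N, unitary_mx U /\
    forall i j, ((B i j)%:C)%C = `|U i j| ^+ 2.

Definition orthostochastic (N : nat) (B : 'M[Real]_N) : Prop :=
  bistochastic B /\
  exists O : 'M[Real]_N, orthogonal_mx O /\
    forall i j, B i j = O i j ^+ 2.

Definition flat_mx (N : nat) : 'M[Real]_N := const_mx (N%:R)^-1.

Definition in_ray (N : nat) (s : 'S_N) (B : 'M[Real]_N) : Prop :=
  exists alpha : Real, 0 <= alpha /\
    B = alpha *: perm_mx s + (1 - alpha) *: flat_mx N /\ bistochastic B.

Definition in_counter_ray (N : nat) (s : 'S_N) (B : 'M[Real]_N) : Prop :=
  exists alpha : Real, alpha <= 0 /\
    B = alpha *: perm_mx s + (1 - alpha) *: flat_mx N /\ bistochastic B.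

(* Main.v *)
Require Import Defs.
From mathcomp Require Import all_boot all_order all_algebra all_fingroup.
From mathcomp Require Import complex Rstruct.
Import Order.TTheory GRing.Theory Num.Theory.
Local Open Scope ring_scope.
From mathcomp Require Import ring.
Set Implicit Arguments. Unset Strict Implicit.
Definition conf_tab (N : nat) : seq (seq int) := match N with
  | 2 => [:: [:: 0; 1]; [:: -1; 0]]
  | 4 => [:: [:: 0; 1; 1; 1]; [:: -1; 0; 1; -1]; [:: -1; -1; 0; 1]; [:: -1; 1; -1; 0]]
  | 6 => [:: [:: 0; 1; 1; 1; 1; 1]; [:: 1; 0; 1; -1; -1; 1]; [:: 1; 1; 0; 1; -1; -1]; [:: 1; -1; 1; 0; 1; -1]; [:: 1; -1; -1; 1; 0; 1]; [:: 1; 1; -1; -1; 1; 0]]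
  | 8 => [:: [:: 0; 1; 1; 1; 1; 1; 1; 1]; [:: -1; 0; 1; 1; -1; 1; -1; -1]; [:: -1; -1; 0; 1; 1; -1; 1; -1]; [:: -1; -1; -1; 0; 1; 1; -1; 1]; [:: -1; 1; -1; -1; 0; 1; 1; -1]; [:: -1; -1; 1; -1; -1; 0; 1; 1]; [:: -1; 1; -1; 1; -1; -1; 0; 1]; [:: -1; 1; 1; -1; 1; -1; -1; 0]]
  | 10 => [:: [:: 0; 1; 1; 1; 1; 1; 1; 1; 1; 1]; [:: 1; 0; 1; 1; 1; -1; -1; 1; -1; -1]; [:: 1; 1; 0; 1; -1; 1; -1; -1; 1; -1]; [:: 1; 1; 1; 0; -1; -1; 1; -1; -1; 1]; [:: 1; 1; -1; -1; 0; 1; 1; 1; -1; -1]; [:: 1; -1; 1; -1; 1; 0; 1; -1; 1; -1]; [:: 1; -1; -1; 1; 1; 1; 0; -1; -1; 1]; [:: 1; 1; -1; -1; 1; -1; -1; 0; 1; 1]; [:: 1; -1; 1; -1; -1; 1; -1; 1; 0; 1]; [:: 1; -1; -1; 1; -1; -1; 1; 1; 1; 0]]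
  | 12 => [:: [:: 0; 1; 1; 1; 1; 1; 1; 1; 1; 1; 1; 1]; [:: -1; 0; 1; -1; 1; 1; 1; -1; -1; -1; 1; -1]; [:: -1; -1; 0; 1; -1; 1; 1; 1; -1; -1; -1; 1]; [:: -1; 1; -1; 0; 1; -1; 1; 1; 1; -1; -1; -1]; [:: -1; -1; 1; -1; 0; 1; -1; 1; 1; 1; -1; -1]; [:: -1; -1; -1; 1; -1; 0; 1; -1; 1; 1; 1; -1]; [:: -1; -1; -1; -1; 1; -1; 0; 1; -1; 1; 1; 1]; [:: -1; 1; -1; -1; -1; 1; -1; 0; 1; -1; 1; 1]; [:: -1; 1; 1; -1; -1; -1; 1; -1; 0; 1; -1; 1]; [:: -1; 1; 1; 1; -1; -1; -1; 1; -1; 0; 1; -1]; [:: -1; -1; 1; 1; 1; -1; -1; -1; 1; -1; 0; 1]; [:: -1; 1; -1; 1; 1; 1; -1; -1; -1; 1; -1; 0]]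
  | 14 => [:: [:: 0; 1; 1; 1; 1; 1; 1; 1; 1; 1; 1; 1; 1; 1]; [:: 1; 0; 1; -1; 1; 1; -1; -1; -1; -1; 1; 1; -1; 1]; [:: 1; 1; 0; 1; -1; 1; 1; -1; -1; -1; -1; 1; 1; -1]; [:: 1; -1; 1; 0; 1; -1; 1; 1; -1; -1; -1; -1; 1; 1]; [:: 1; 1; -1; 1; 0; 1; -1; 1; 1; -1; -1; -1; -1; 1]; [:: 1; 1; 1; -1; 1; 0; 1; -1; 1; 1; -1; -1; -1; -1]; [:: 1; -1; 1; 1; -1; 1; 0; 1; -1; 1; 1; -1; -1; -1]; [:: 1; -1; -1; 1; 1; -1; 1; 0; 1; -1; 1; 1; -1; -1]; [:: 1; -1; -1; -1; 1; 1; -1; 1; 0; 1; -1; 1; 1; -1]; [:: 1; -1; -1; -1; -1; 1; 1; -1; 1; 0; 1; -1; 1; 1]; [:: 1; 1; -1; -1; -1; -1; 1; 1; -1; 1; 0; 1; -1; 1]; [:: 1; 1; 1; -1; -1; -1; -1; 1; 1; -1; 1; 0; 1; -1]; [:: 1; -1; 1; 1; -1; -1; -1; -1; 1; 1; -1; 1; 0; 1]; [:: 1; 1; -1; 1; 1; -1; -1; -1; -1; 1; 1; -1; 1; 0]]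
  | 16 => [:: [:: 0; 1; 1; 1; 1; 1; 1; 1; 1; 1; 1; 1; 1; 1; 1; 1]; [:: -1; 0; 1; 1; -1; 1; -1; -1; -1; 1; 1; 1; -1; 1; -1; -1]; [:: -1; -1; 0; 1; 1; -1; 1; -1; -1; -1; 1; 1; 1; -1; 1; -1]; [:: -1; -1; -1; 0; 1; 1; -1; 1; -1; -1; -1; 1; 1; 1; -1; 1]; [:: -1; 1; -1; -1; 0; 1; 1; -1; -1; 1; -1; -1; 1; 1; 1; -1]; [:: -1; -1; 1; -1; -1; 0; 1; 1; -1; -1; 1; -1; -1; 1; 1; 1]; [:: -1; 1; -1; 1; -1; -1; 0; 1; -1; 1; -1; 1; -1; -1; 1; 1]; [:: -1; 1; 1; -1; 1; -1; -1; 0; -1; 1; 1; -1; 1; -1; -1; 1]; [:: -1; 1; 1; 1; 1; 1; 1; 1; 0; -1; -1; -1; -1; -1; -1; -1]; [:: -1; -1; 1; 1; -1; 1; -1; -1; 1; 0; -1; -1; 1; -1; 1; 1]; [:: -1; -1; -1; 1; 1; -1; 1; -1; 1; 1; 0; -1; -1; 1; -1; 1]; [:: -1; -1; -1; -1; 1; 1; -1; 1; 1; 1; 1; 0; -1; -1; 1; -1]; [:: -1; 1; -1; -1; -1; 1; 1; -1; 1; -1; 1; 1; 0; -1; -1; 1]; [:: -1; -1; 1; -1; -1; -1; 1; 1; 1; 1; -1; 1; 1; 0; -1; -1]; [:: -1; 1; -1; 1; -1; -1; -1; 1; 1; -1; 1; -1; 1; 1; 0; -1]; [:: -1; 1; 1;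 -1; 1; -1; -1; -1; 1; -1; -1; 1; -1; 1; 1; 0]]
  | 18 => [:: [:: 0; 1; 1; 1; 1; 1; 1; 1; 1; 1; 1; 1; 1; 1; 1; 1; 1; 1]; [:: 1; 0; 1; 1; -1; 1; -1; -1; -1; 1; 1; -1; -1; -1; 1; -1; 1; 1]; [:: 1; 1; 0; 1; 1; -1; 1; -1; -1; -1; 1; 1; -1; -1; -1; 1; -1; 1]; [:: 1; 1; 1; 0; 1; 1; -1; 1; -1; -1; -1; 1; 1; -1; -1; -1; 1; -1]; [:: 1; -1; 1; 1; 0; 1; 1; -1; 1; -1; -1; -1; 1; 1; -1; -1; -1; 1]; [:: 1; 1; -1; 1; 1; 0; 1; 1; -1; 1; -1; -1; -1; 1; 1; -1; -1; -1]; [:: 1; -1; 1; -1; 1; 1; 0; 1; 1; -1; 1; -1; -1; -1; 1; 1; -1; -1]; [:: 1; -1; -1; 1; -1; 1; 1; 0; 1; 1; -1; 1; -1; -1; -1; 1; 1; -1]; [:: 1; -1; -1; -1; 1; -1; 1; 1; 0; 1; 1; -1; 1; -1; -1; -1; 1; 1]; [:: 1; 1; -1; -1; -1; 1; -1; 1; 1; 0; 1; 1; -1; 1; -1; -1; -1; 1]; [:: 1; 1; 1; -1; -1; -1; 1; -1; 1; 1; 0; 1; 1; -1; 1; -1; -1; -1]; [:: 1; -1; 1; 1; -1; -1; -1; 1; -1; 1; 1; 0; 1; 1; -1; 1; -1; -1]; [:: 1; -1; -1; 1; 1; -1; -1; -1; 1; -1; 1; 1; 0; 1; 1; -1; 1;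 -1]; [:: 1; -1; -1; -1; 1; 1; -1; -1; -1; 1; -1; 1; 1; 0; 1; 1; -1; 1]; [:: 1; 1; -1; -1; -1; 1; 1; -1; -1; -1; 1; -1; 1; 1; 0; 1; 1; -1]; [:: 1; -1; 1; -1; -1; -1; 1; 1; -1; -1; -1; 1; -1; 1; 1; 0; 1; 1]; [:: 1; 1; -1; 1; -1; -1; -1; 1; 1; -1; -1; -1; 1; -1; 1; 1; 0; 1]; [:: 1; 1; 1; -1; 1; -1; -1; -1; 1; 1; -1; -1; -1; 1; -1; 1; 1; 0]]
  | 20 => [:: [:: 0; 1; 1; 1; 1; 1; 1; 1; 1; 1; 1; 1; 1; 1; 1; 1; 1; 1; 1; 1]; [:: -1; 0; 1; -1; -1; 1; 1; 1; 1; -1; 1; -1; 1; -1; -1; -1; -1; 1; 1; -1]; [:: -1; -1; 0; 1; -1; -1; 1; 1; 1; 1; -1; 1; -1; 1; -1; -1; -1; -1; 1; 1]; [:: -1; 1; -1; 0; 1; -1; -1; 1; 1; 1; 1; -1; 1; -1; 1; -1; -1; -1; -1; 1]; [:: -1; 1; 1; -1; 0; 1; -1; -1; 1; 1; 1; 1; -1; 1; -1; 1; -1; -1; -1; -1]; [:: -1; -1; 1; 1; -1; 0; 1; -1; -1; 1; 1; 1; 1; -1; 1; -1; 1; -1; -1; -1]; [:: -1; -1; -1; 1; 1; -1; 0; 1; -1; -1; 1; 1; 1; 1; -1; 1; -1; 1; -1; -1]; [:: -1; -1; -1; -1; 1; 1; -1; 0; 1; -1; -1; 1; 1; 1; 1;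 -1; 1; -1; 1; -1]; [:: -1; -1; -1; -1; -1; 1; 1; -1; 0; 1; -1; -1; 1; 1; 1; 1; -1; 1; -1; 1]; [:: -1; 1; -1; -1; -1; -1; 1; 1; -1; 0; 1; -1; -1; 1; 1; 1; 1; -1; 1; -1]; [:: -1; -1; 1; -1; -1; -1; -1; 1; 1; -1; 0; 1; -1; -1; 1; 1; 1; 1; -1; 1]; [:: -1; 1; -1; 1; -1; -1; -1; -1; 1; 1; -1; 0; 1; -1; -1; 1; 1; 1; 1; -1]; [:: -1; -1; 1; -1; 1; -1; -1; -1; -1; 1; 1; -1; 0; 1; -1; -1; 1; 1; 1; 1]; [:: -1; 1; -1; 1; -1; 1; -1; -1; -1; -1; 1; 1; -1; 0; 1; -1; -1; 1; 1; 1]; [:: -1; 1; 1; -1; 1; -1; 1; -1; -1; -1; -1; 1; 1; -1; 0; 1; -1; -1; 1; 1]; [:: -1; 1; 1; 1; -1; 1; -1; 1; -1; -1; -1; -1; 1; 1; -1; 0; 1; -1; -1; 1]; [:: -1; 1; 1; 1; 1; -1; 1; -1; 1; -1; -1; -1; -1; 1; 1; -1; 0; 1; -1; -1]; [:: -1; -1; 1; 1; 1; 1; -1; 1; -1; 1; -1; -1; -1; -1; 1; 1; -1; 0; 1; -1]; [:: -1; -1; -1; 1; 1; 1; 1; -1; 1; -1; 1; -1; -1; -1; -1; 1; 1; -1; 0; 1]; [:: -1; 1; -1; -1; 1; 1; 1; 1; -1; 1; -1; 1; -1; -1; -1; -1; 1; 1; -1; 0]]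
  | _ => [::] end.

Definition cf (N i j : nat) : int := nth 0 (nth [::] (conf_tab N) i) j.
Definition lsum (f : nat -> int) (n : nat) : int := foldr (fun k acc => f k + acc) 0 (iota 0 n).
Definition conf_ok (N : nat) (skew : bool) : bool :=
  all (fun i => all (fun j =>
     [&& (if i == j then cf N i j == 0 else cf N i j * cf N i j == 1),
         cf N j i == (if skew then - cf N i j else cf N i j)
       & lsum (fun k => cf N i k * cf N j k) N == (if i == j then (N.-1)%:Z else 0)]) (iota 0 N)) (iota 0 N).
Definition skewb N := N \notin [:: 6;10;14;18]%N.
Lemma conf_all : all (fun N => ~~ odd N ==> conf_ok N (skewb N)) (iota 1 21).
Proof. vm_compute. reflexivity. Qed.
Lemma lsumE (f : nat -> int) n : lsum f n = \sum_(k < n) f k.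
Proof.
rewrite -(big_mkord xpredT) /index_iota subn0 /lsum.
by elim: (iota 0 n) => [|k r IH] /=; rewrite ?big_nil ?big_cons ?IH.
Qed.

Section Conf.
Variables (N : nat) (skew : bool) (Hok : conf_ok N skew).

Lemma conf_pt (i j : 'I_N) :
  [&& (if val i == val j then cf N i j == 0 else cf N i j * cf N i j == 1),
         cf N j i == (if skew then - cf N i j else cf N i j)
       & lsum (fun k => cf N i k * cf N j k) N == (if val i == val j then (N.-1)%:Z else 0)].
Proof.
move/allP: Hok => /(_ i); rewrite mem_iota add0n ltn_ord => /(_ isT).
by move/allP => /(_ j); rewrite mem_iota add0n ltn_ord => /(_ isT).
Qed.

Definition Cm (R : pzRingType) : 'M[R]_N := \matrix_(i, j) (cf N i j)%:~R.

Lemma CmE (R : pzRingType) i j : Cm R i j = (cf N i j)%:~R.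
Proof. exact: mxE. Qed.

Lemma Cm_diag (R : pzRingType) (i : 'I_N) : Cm R i i = 0.
Proof. by have /and3P[] := conf_pt i i; rewrite eqxx CmE => /eqP ->. Qed.

Lemma Cm_sq (R : pzRingType) (i j : 'I_N) : i != j -> Cm R i j ^+ 2 = 1.
Proof.
move=> ij; have /and3P[] := conf_pt i j; rewrite (negbTE (ij : val i != val j)) CmE.
by move=> /eqP h _ _; rewrite expr2 -intrM h.
Qed.

Lemma Cm_tr (R : pzRingType) : (Cm R)^T = if skew then - Cm R else Cm R.
Proof.
apply/matrixP=> i j; have /and3P[_ /eqP h _] := conf_pt i j.
by case: skew h => h; rewrite !mxE ?CmE h // mulrNz.
Qed.

Lemma Cm_mul (R : comPzRingType) : Cm R *m (Cm R)^T = (N.-1)%:R%:M.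
Proof.
apply/matrixP=> i j; have /and3P[_ _ /eqP h] := conf_pt i j.
rewrite !mxE.
under eq_bigr do rewrite ?mxE ?CmE -intrM.
rewrite -rmorph_sum -(lsumE (fun k => cf N i k * cf N j k)) h.
have -> : (i == j) = (val i == val j) by []. case: (val i == val j); rewrite ?mulr1n ?mulr0n ?rmorph0 //.
Qed.

End Conf.

Lemma sq_form (R : comPzRingType) n (x z k: R) (C : 'M[R]_n) : C *m C = k%:M ->
  (x%:M + z *: C) *m (x%:M - z *: C) = (x*x - z*z*k)%:M.
Proof.
move=> h.
rewrite mulmxDl !mulmxBr !mul_scalar_mx -!scalemxAl -!scalemxAr h !mul_mx_scalar.
rewrite !scalerA mulrC addrA subrK !scale_scalar_mx -mulrA.
by rewrite -raddfB.
Qed.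

Lemma ortho_of N (s : 'S_N) (B : 'M[Real]_N) a b :
  bistochastic B -> 0 <= a -> 0 <= b -> a + (N.-1)%:R * b = 1 ->
  (forall i j, B i j = if s i == j then a else b) ->
  conf_ok N true -> orthostochastic B.
Proof.
move=> bB ha hb h1 HB ok; split=> //.
pose x := Num.sqrt a; pose y := Num.sqrt b.
pose C := Cm N Real.
exists (col_perm s^-1 (x%:M + y *: C)); split.
- rewrite /orthogonal_mx tr_col_perm row_permE col_permE invgK -mulmxA.
  rewrite (mulmxA (perm_mx s)) -perm_mxM mulgV perm_mx1 mul1mx.
  rewrite raddfD /= tr_scalar_mx linearZ /= (Cm_tr ok) scalerN.
  have hC : C *m C = (- (N.-1)%:R : Real)%:M.
    have := Cm_mul ok Real; rewrite (Cm_tr ok) mulmxN => /eqP.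
    by rewrite eqr_oppLR => /eqP ->; rewrite raddfN.
  rewrite (sq_form x y hC); congr (_%:M).
  by rewrite -!expr2 !sqr_sqrtr // mulrN opprK mulrC.
- move=> i j; rewrite HB !mxE -(CmE Real) (canF_eq (permK s)).
  case: eqP => [->|ne]; last have ne' : i != (s^-1)%g j by apply/eqP.
    by rewrite mulr1n (Cm_diag ok) mulr0 addr0 sqr_sqrtr.
  rewrite mulr0n add0r exprMn (Cm_sq ok) // mulr1 sqr_sqrtr //.
Qed.

Local Open Scope complex_scope.
Lemma ortho_uni N (B : 'M[Real]_N) : orthostochastic B -> unistochastic B.
Proof.
case=> bB [O [hO hE]]; split=> //.
exists (map_mx (real_complex Real) O); split.
- rewrite /unitary_mx.
  have -> : map_mx Num.conj (map_mx (real_complex Real) O) = map_mx (real_complex Real) O.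
    by apply/matrixP=> i j; rewrite !mxE; apply: conjc_real.
  by have := congr1 (map_mx (real_complex Real)) hO; rewrite map_mxM map_trmx map_scalar_mx rmorph1.
- move=> i j; rewrite mxE hE -normrX -rmorphXn ger0_norm // ler0c sqr_ge0 //.
Qed.

Lemma conjR (r : Real) : Num.conj (r%:C : Real[i]) = r%:C.
Proof. exact: conjc_real. Qed.

Lemma conj_i : Num.conj ('i%C : Real[i]) = - 'i%C.
Proof. by apply/eqP; rewrite eq_complex /= oppr0 !eqxx. Qed.

Lemma uni_of N (s : 'S_N) (B : 'M[Real]_N) a b :
  bistochastic B -> 0 <= a -> 0 <= b -> a + (N.-1)%:R * b = 1 ->
  (forall i j, B i j = if s i == j then a else b) ->
  conf_ok N false -> unistochastic B.
Proof.
move=> bB ha hb h1 HB ok; split=> //.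
pose x : Real[i] := (Num.sqrt a)%:C. pose z : Real[i] := 'i%C * (Num.sqrt b)%:C.
pose C := Cm N Real[i].
have ex : x * x = a%:C by rewrite -rmorphM -expr2 sqr_sqrtr.
have ez : z * z = - b%:C.
  by rewrite mulrACA -expr2 sqr_i -rmorphM -expr2 sqr_sqrtr // mulN1r.
exists (col_perm s^-1 (x%:M + z *: C)); split.
- rewrite /unitary_mx map_col_perm tr_col_perm row_permE col_permE invgK -mulmxA.
  rewrite (mulmxA (perm_mx s)) -perm_mxM mulgV perm_mx1 mul1mx.
  have -> : map_mx Num.conj (x%:M + z *: C) = x%:M - z *: C.
    apply/matrixP=> i j; rewrite !mxE rmorphD rmorphMn rmorphM /= rmorph_int.
    by rewrite rmorphM /= conj_i /x /z !conjR !mulNr.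
  rewrite raddfB /= tr_scalar_mx linearZ /= (Cm_tr ok) /=.
  have hC : C *m C = ((N.-1)%:R : Real[i])%:M.
    by have := Cm_mul ok Real[i]; rewrite (Cm_tr ok).
  rewrite (sq_form x z hC); congr (_%:M).
  have h1c : ((a + (N.-1)%:R * b)%:C : Real[i]) = 1 by rewrite h1.
  by rewrite ex ez -[in RHS]h1c rmorphD rmorphM /= rmorph_nat mulNr opprK mulrC.
- move=> i j; rewrite HB !mxE -(CmE Real[i]) (canF_eq (permK s)).
  case: eqP => [->|ne] /=; last have ne' : i != (s^-1)%g j by apply/eqP.
    rewrite mulr1n (Cm_diag ok) mulr0 addr0 -normrX expr2 ex ger0_norm //.
    by rewrite ler0c.
  rewrite mulr0n add0r -normrX exprMn (Cm_sq ok) // mulr1 expr2 ez normrN.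
  by rewrite ger0_norm // ler0c.
Qed.

Lemma skew_list : all (fun N => (N \in [:: 2; 4; 8; 12; 16; 20]%N) ==> skewb N) (iota 0 22).
Proof. by vm_compute. Qed.

Lemma core N (s : 'S_N) (B : 'M[Real]_N) al :
  (0 < N)%N -> (N < 22)%N -> ~~ odd N ->
  B = al *: perm_mx s + (1 - al) *: flat_mx N -> bistochastic B ->
  unistochastic B /\
    ((N \in [:: 2; 4; 8; 12; 16; 20]%N) -> orthostochastic B) /\
    ((N \in [:: 6; 10; 14; 18]%N) -> unistochastic B).
Proof.
move=> h0 h22 hev HBe bB.
pose b : Real := (1 - al) / N%:R. pose a : Real := al + b.
have HB : forall i j, B i j = if s i == j then a else b.
  move=> i j; rewrite HBe /perm_mx /flat_mx !mxE.
  by case: (s i == j); rewrite /a /b ?mulr1 ?mulr0 ?add0r.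
have hN0 : (N%:R : Real) != 0 by rewrite pnatr_eq0 -lt0n.
have h1 : a + (N.-1)%:R * b = 1.
  have hN : ((N.-1)%:R : Real) = N%:R - 1.
    by rewrite -{2}(prednK h0) -natr1 addrK.
  rewrite /a /b hN; field.
  exact: hN0.
have h2 : (1 < N)%N by move: h0 hev; case: (N) => [|[|n]].
pose i0 : 'I_N := Ordinal h0.
have ha : 0 <= a by have := bB.1 i0 (s i0); rewrite HB eqxx.
have hb : 0 <= b.
  pose j0 : 'I_N := Ordinal h0. pose j1 : 'I_N := Ordinal h2.
  case: (eqVneq (s i0) j0) => e.
    have := bB.1 i0 j1; rewrite HB e.
    by case: eqP => // /(congr1 val).
  by have := bB.1 i0 j0; rewrite HB (negbTE e).
have ok : conf_ok N (skewb N).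
  have := allP conf_all N; rewrite mem_iota h0 /= add1n => /(_ h22) /implyP.
  exact.
have hsk : (N \in [:: 2; 4; 8; 12; 16; 20]%N) -> skewb N.
  by apply/implyP; have := allP skew_list N; rewrite mem_iota /= add0n; apply.
have uni : unistochastic B.
  case E : (skewb N) ok => ok.
    exact: ortho_uni (ortho_of bB ha hb h1 HB ok).
  exact: uni_of bB ha hb h1 HB ok.
split=> //; split=> // hin.
by have := hsk hin => E; rewrite E in ok; exact: ortho_of bB ha hb h1 HB ok.
Qed.

Unset Implicit Arguments.
Local Close Scope complex_scope.

Theorem mainTheorem4 (N : nat) :
  (0 < N)%N -> (N < 22)%N -> ~~ odd N ->
  forall (s : 'S_N) (B : 'M[Real]_N),
    (in_ray s B \/ in_counter_ray s B) ->
    unistochastic B /\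
    ((N \in [:: 2; 4; 8; 12; 16; 20]%N) -> orthostochastic B) /\
    ((N \in [:: 6; 10; 14; 18]%N) -> unistochastic B).
Proof.
move=> h0 h22 hev s B [[al [_ [HBe bB]]]|[al [_ [HBe bB]]]]; exact: core HBe bB.
Qed.
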